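(* Let $\mathcal G_x$ be a matching graph with arrival distribution $(\alpha_i)$ such that a Braess paradox occurs when the edge $\{u,v\}$ ($u,v$ distinct non-adjacent nodes) is added, i.e. $\mathbb E[Q_x]<\mathbb E[\overline{Q_x}]$, where $\overline{\mathcal G_x}$ is $\mathcal G_x$ plus the edge $\{u,v\}$ and both FCFS models are stable. Let $x$ be a node distinct from $u$ and $v$, and let $\mathcal G_{yz}$ with arrival distribution $(\beta_i)$ be obtained by decomposing $x$ into $y$ and $z$, with $\beta_y,\beta_z>0$ (not necessarily equal), $\beta_y+\beta_z=\alpha_x$, and $\beta_i=\alpha_i$ for $i\ne x$. Let $\overline{\mathcal G_{yz}}$ be $\mathcal G_{yz}$ plus the edge $\{u,v\}$. Then $\mathbb E[Q_{yz}]<\mathbb E[\overline{Q_{yz}}]$, i.e. the Braess paradox also occurs for $(\mathcal G_{yz},\beta)$.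
   Context: A matching model consists of a finite connected simple graph and an arrival distribution on its nodes with positive entries. Under FCFS, the state is the word of unmatched item classes in order of arrival; an arriving item of class $i$ deletes the oldest letter of the word that is a neighbour of $i$, and if there is none $i$ is appended. For a stable model, $\mathbb E[Q]$ is the stationary mean number of items (word length). Decomposition: given a graph $\mathcal G_x=(\mathcal V,\xi)$ with node $x$, $\mathcal G_{yz}$ has node set $(\mathcal V\setminus\{x\})\cup\{y,z\}$ with $y,z$ new nodes; edges among $\mathcal V\setminus\{x\}$ are as in $\mathcal G_x$ and each of $y$ and $z$ is adjacent exactly to the neighbours of $x$ in $\mathcal G_x$ (so $y,z$ are not adjacent). $\mathbb E[Q_x],\mathbb E[\overline{Q_x}],\mathbb E[Q_{yz}],\mathbb E[\overline{Q_{yz}}]$ denote the stationary mean numbers of items for $(\mathcal G_x,\alpha)$, $(\overline{\mathcal G_x},\alpha)$, $(\mathcal G_{yz},\beta)$, $(\overline{\mathcal G_{yz}},\beta)$ respectively. *)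

(* Defs.v *)
From HB Require Import structures.
From mathcomp Require Import all_boot all_order all_algebra.
From mathcomp Require Import all_classical all_reals all_analysis.
Set Implicit Arguments. Unset Strict Implicit. Unset Printing Implicit Defensive.
Import Order.TTheory GRing.Theory Num.Theory numFieldNormedType.Exports.
Local Open Scope ring_scope.
Local Open Scope classical_set_scope.

Section FCFS.
Variables (R : realType) (T : finType).

Definition has_sum (a : nat -> R) (l : R) : Prop :=
  series a @ \oo --> l.

(* FCFS update of the word w when an item of class i arrives under the
   compatibility graph e: delete the oldest letter adjacent to i, or append i. *)
Definition fcfs_step (e : rel T) (w : seq T) (i : T) : seq T :=
  let k := find (e i) w in
  if (k < size w)%N then take k w ++ drop k.+1 w else rcons w i.

Definition fcfs_P (e : rel T) (alpha : T -> R) (w w' : seq T) : R :=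
  \sum_(i : T | fcfs_step e w i == w') alpha i.

(* pi is a stationary probability distribution on words (seq T), where the
   countable sum over words is organised by word length n (n.-tuple T). *)
Definition fcfs_stationary (e : rel T) (alpha : T -> R) (pi : seq T -> R) : Prop :=
  [/\ forall w, 0 <= pi w,
      has_sum (fun n => \sum_(t : n.-tuple T) pi t) 1
    & forall w', has_sum (fun n => \sum_(t : n.-tuple T) pi t * fcfs_P e alpha t w') (pi w')].

(* the model (e, alpha) is stable and its stationary mean number of items is m *)
Definition mean_queue (e : rel T) (alpha : T -> R) (m : R) : Prop :=
  exists pi, fcfs_stationary e alpha pi /\
    has_sum (fun n => n%:R * \sum_(t : n.-tuple T) pi t) m.

Definition add_edge (e : rel T) (u v : T) : rel T :=
  fun a b => [|| e a b, (a == u) && (b == v) | (a == v) && (b == u)].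

End FCFS.

Section Decomp.
Variables (R : realType) (T : finType).
(* decomposition of node x into y := Some x and z := None, on option T *)
Definition decomp (e : rel T) (x : T) : rel (option T) :=
  fun a b => match a, b with
  | Some a, Some b => e a b
  | None, Some b => e x b
  | Some a, None => e a x
  | None, None => false
  end.

Definition decomp_dist (alpha : T -> R) (x : T) (by_ bz : R) : option T -> R :=
  fun a => match a with
  | None => bz
  | Some a => if a == x then by_ else alpha a
  end.
End Decomp.

(* Main.v *)
Require Import Defs.
From HB Require Import structures.
From mathcomp Require Import all_boot all_order all_algebra.
From mathcomp Require Import all_classical all_reals all_analysis.
From mathcomp Require Import ring lra.
Import Order.TTheory GRing.Theory Num.Theory.
Local Open Scope ring_scope.

Section Helpers.
Variables (R : realType).

Lemma step_nil (T : finType) (e : rel T) i : fcfs_step e [::] i = [:: i].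
Proof. by rewrite /fcfs_step /=. Qed.

Lemma step_cons (T : finType) (e : rel T) c t i :
  fcfs_step e (c :: t) i = if e i c then t else c :: fcfs_step e t i.
Proof.
rewrite /fcfs_step /=; case: (e i c) => //=; first by rewrite drop0.
have -> : ((find (e i) t).+1 < (size t).+1)%N = (find (e i) t < size t)%N by [].
by case: ifP.
Qed.

Lemma big_opt (T : finType) (F : option T -> R) :
  \sum_(c : option T) F c = F None + \sum_(a : T) F (Some a).
Proof.
rewrite (bigD1 None) //=; congr (_ + _).
rewrite (reindex_omap Some (fun c => c)) /=; first by apply: eq_bigl => a /=; rewrite eqxx.
by case.
Qed.
End Helpers.

Section Lift.
Variables (R : realType) (T : finType) (e : rel T) (x : T) (alpha : T -> R) (by_ bz : R).
Hypothesis exx : e x x = false.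
Hypothesis ax : 0 < alpha x.
Hypothesis by0 : 0 <= by_.
Hypothesis bz0 : 0 <= bz.
Hypothesis bsum : by_ + bz = alpha x.

Definition proj (c : option T) : T := if c is Some a then a else x.
Definition wt (c : option T) : R :=
  match c with None => bz / alpha x | Some a => if a == x then by_ / alpha x else 1 end.
Definition W (s : seq (option T)) : R := \prod_(c <- s) wt c.
Definition beta := decomp_dist alpha x by_ bz.

Fixpoint liftsum (t' : seq T) (K : seq (option T) -> R) : R :=
  match t' with
  | [::] => K [::]
  | a :: t'' => \sum_(c | proj c == a) liftsum t'' (fun t => K (c :: t))
  end.

Lemma decomp_proj a b : decomp e x a b = e (proj a) (proj b).
Proof. by case: a => [a|]; case: b => [b|] //=; rewrite exx. Qed.

Lemma wt_ge0 c : 0 <= wt c.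
Proof. case: c => [a|] /=; last exact: divr_ge0 (ltW ax).
by case: ifP => _ //; exact: divr_ge0 (ltW ax). Qed.

Lemma W_ge0 s : 0 <= W s.
Proof. by rewrite /W; apply: prodr_ge0 => c _; exact: wt_ge0. Qed.

Lemma W_cons c s : W (c :: s) = wt c * W s.
Proof. by rewrite /W big_cons. Qed.

Lemma W_nil : W [::] = 1.
Proof. by rewrite /W big_nil. Qed.

Lemma wt_sum a : \sum_(c | proj c == a) wt c = 1.
Proof.
rewrite big_mkcond big_opt /=.
have Hax : alpha x != 0 by rewrite gt_eqF.
case: (eqVneq x a) => [<-|nxa].
  rewrite (bigD1 x) //= !eqxx big1 => [|b /negPf nb]; last by rewrite nb.
  rewrite addr0 -mulrDl addrC bsum divff //.
rewrite add0r (bigD1 a) //= eqxx big1 => [|b /negPf nb]; last by rewrite nb.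
by rewrite eq_sym (negPf nxa) addr0.
Qed.

Lemma beta_wt c : beta c = wt c * alpha (proj c).
Proof.
have Hax : alpha x != 0 by rewrite gt_eqF.
case: c => [a|] /=; last by rewrite mulrVK ?unitfE.
by case: (eqVneq a x) => [->|] /=; [rewrite mulrVK ?unitfE | rewrite mul1r].
Qed.

Lemma pick_sum a d (f : option T -> R) :
  \sum_(c | proj c == a) (c == d)%:R * f c = (proj d == a)%:R * f d.
Proof.
rewrite big_mkcond (bigD1 d) //= big1 => [|c nd]; last by rewrite (negPf nd) mul0r; case: ifP.
by rewrite eqxx addr0; case: ifP => _; rewrite ?mul1r ?mul0r.
Qed.

Lemma beta_lift (G : T -> R) :
  \sum_(c : option T) beta c * G (proj c) = \sum_(a : T) alpha a * G a.
Proof.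
rewrite (partition_big proj xpredT) //=; apply: eq_bigr => a _.
rewrite (eq_bigr (fun c => wt c * (alpha a * G a))) => [|c /eqP <-]; last first.
  by rewrite beta_wt mulrA.
by rewrite -big_distrl /= wt_sum mul1r.
Qed.


Lemma sum_tuple_cons (A : finType) n (F : n.+1.-tuple A -> R) :
  \sum_(t : n.+1.-tuple A) F t = \sum_(a : A) \sum_(t : n.-tuple A) F (cons_tuple a t).
Proof.
rewrite pair_big /= (reindex (fun p : A * n.-tuple A => cons_tuple p.1 p.2)) //.
exists (fun t => (thead t, behead_tuple t)).
  by move=> [a t] _ /=; congr pair; apply: val_inj.
by move=> t _; case: t / tupleP => a t; apply: val_inj.
Qed.

Lemma sum_tuple0 (A : finType) (F : 0.-tuple A -> R) :
  \sum_(t : 0.-tuple A) F t = F [tuple].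
Proof. by rewrite (big_pred1 [tuple]) // => t /=; apply/esym/eqP; exact: tuple0. Qed.

Lemma sum_lift n (H : seq T -> R) (K : seq (option T) -> R) :
  \sum_(t : n.-tuple (option T)) H (map proj t) * K t =
  \sum_(t' : n.-tuple T) H t' * liftsum t' K.
Proof.
elim: n H K => [|n IH] H K; first by rewrite !sum_tuple0.
rewrite !sum_tuple_cons (partition_big proj xpredT) //=; apply: eq_bigr => a _.
under [RHS]eq_bigr do rewrite big_distrr.
rewrite [RHS]exchange_big /=; apply: eq_bigr => c /eqP <-.
exact: (IH (fun s => H (proj c :: s)) (fun s => K (c :: s))).
Qed.

Lemma liftsum_ext t' K1 K2 : (forall t, K1 t = K2 t) -> liftsum t' K1 = liftsum t' K2.
Proof.
elim: t' K1 K2 => [|a t' IH] K1 K2 H //=; apply: eq_bigr => c _; exact: IH.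
Qed.

Lemma liftsum_sum (I : finType) t' (F : I -> seq (option T) -> R) :
  liftsum t' (fun t => \sum_(i : I) F i t) = \sum_(i : I) liftsum t' (F i).
Proof.
elim: t' F => [|a t' IH] F //=; rewrite exchange_big /=; apply: eq_bigr => c _.
exact: (IH (fun i t => F i (c :: t))).
Qed.

Lemma liftsum_scale t' k K : liftsum t' (fun t => k * K t) = k * liftsum t' K.
Proof.
elim: t' K => [|a t' IH] K //=; rewrite big_distrr /=; apply: eq_bigr => c _.
exact: (IH (fun t => K (c :: t))).
Qed.

Lemma liftsum_W t' : liftsum t' W = 1.
Proof.
elim: t' => [|a t' IH] /=; first exact: W_nil.
rewrite -(wt_sum a); apply: eq_bigr => c _.
rewrite (@liftsum_ext _ _ (fun t => wt c * W t)) ?liftsum_scale ?IH ?mulr1 //.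
by move=> t; rewrite W_cons.
Qed.

Lemma liftsum_Wind t' w : liftsum t' (fun t => W t * (t == w)%:R) = W w * (map proj w == t')%:R.
Proof.
elim: t' w => [|a t' IH] [|d w] /=.
- by rewrite !W_nil !mul1r.
- by rewrite !mulr0.
- rewrite big1 ?mulr0 // => c _; rewrite (@liftsum_ext _ _ (fun t => 0 * W t)).
    by rewrite liftsum_scale mul0r.
  by move=> t; rewrite mulr0 mul0r.
- under eq_bigr => c _.
    rewrite (@liftsum_ext _ _ (fun t => ((c == d)%:R * wt c) * (W t * (t == w)%:R))); last first.
      by move=> t; rewrite W_cons eqseq_cons -mulnb natrM; ring.
    rewrite liftsum_scale IH -mulrA.
  over.
  rewrite pick_sum W_cons eqseq_cons -mulnb natrM; ring.
Qed.


Fixpoint E (t' : seq T) (i : option T) (w : seq (option T)) : R :=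
  match t' with
  | [::] => (w == [:: i])%:R
  | a :: t'' => if e (proj i) a then W w * (map proj w == t'')%:R
     else match w with [::] => 0 | d :: w3 => wt d * (proj d == a)%:R * E t'' i w3 end
  end.

Lemma liftsum_step t' i w :
  liftsum t' (fun t => W t * (fcfs_step (decomp e x) t i == w)%:R) = E t' i w.
Proof.
elim: t' w => [|a t' IH] w /=.
  by rewrite step_nil W_nil mul1r eq_sym.
under eq_bigr => c /eqP Hc.
  rewrite (@liftsum_ext _ _ (fun t => wt c * (W t * (if e (proj i) a then (t == w)
       else (c :: fcfs_step (decomp e x) t i == w))%:R))); last first.
    by move=> t; rewrite step_cons decomp_proj Hc W_cons mulrA; case: ifP.
  rewrite liftsum_scale.
over.
case: ifP => Hia.
  under eq_bigr do rewrite liftsum_Wind.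
  by rewrite -big_distrl /= wt_sum mul1r.
case: w => [|d w].
  rewrite big1 // => c _; rewrite (@liftsum_ext _ _ (fun t => 0 * W t)).
    by rewrite liftsum_scale mul0r mulr0.
  by move=> t; rewrite mulr0 mul0r.
under eq_bigr => c _.
  rewrite (@liftsum_ext _ _ (fun t => (c == d)%:R * (W t * (fcfs_step (decomp e x) t i == w)%:R))); last first.
    by move=> t; rewrite eqseq_cons -mulnb natrM; ring.
  rewrite liftsum_scale IH mulrCA.
over.
rewrite pick_sum; ring.
Qed.

Lemma E_sum t' w (g : T -> R) :
  \sum_i beta i * g (proj i) * E t' i w =
  W w * \sum_a alpha a * g a * (fcfs_step e t' a == map proj w)%:R.
Proof.
elim: t' w g => [|a t' IH] w g /=.
  case: w => [|d [|d2 w]].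
  - rewrite big1 ?mulr0 ?big1 ?mulr0 // => b _; last by rewrite mulr0.
    by rewrite step_nil /= mulr0.
  - rewrite (bigD1 d) //= big1 => [|i nd]; last first.
      by rewrite eqseq_cons andbT eq_sym (negPf nd) mulr0.
    rewrite (bigD1 (proj d)) //= big1 => [|b nd]; last first.
      by rewrite step_nil eqseq_cons andbT (negPf nd) mulr0.
    rewrite step_nil !eqxx W_cons W_nil beta_wt; ring.
  - rewrite big1 ?mulr0 ?big1 ?mulr0 // => b _.
      by rewrite step_nil; case: eqP => //= _; rewrite mulr0.
    by case: eqP => //= _; rewrite mulr0.
case: w => [|d w].
  rewrite (eq_bigr (fun i => beta i * (g (proj i) * (e (proj i) a)%:R * ([::] == t')%:R))); last first.
    by move=> i _; case: (e (proj i) a); rewrite /= ?W_nil; ring.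
  rewrite (beta_lift (fun b => g b * (e b a)%:R * ([::] == t')%:R)) W_nil mul1r; apply: eq_bigr => b _.
  rewrite step_cons; case: (e b a) => /=; last by ring.
  by rewrite (eq_sym t'); ring.
have HE : forall i, E (a::t') i (d::w) = (e (proj i) a)%:R * (W (d::w) * (proj d :: map proj w == t')%:R)
   + (~~ e (proj i) a)%:R * (wt d * (proj d == a)%:R * E t' i w).
  by move=> i /=; case: (e (proj i) a); rewrite /= ?mul1r ?mul0r ?addr0 ?add0r.
have HS : forall b : T, ((fcfs_step e (a::t') b == proj d :: map proj w)%:R : R) =
   (e b a)%:R * (proj d :: map proj w == t')%:R +
   (~~ e b a)%:R * ((a == proj d)%:R * (fcfs_step e t' b == map proj w)%:R).
  move=> b; rewrite step_cons; case: (e b a); rewrite /= ?mul1r ?mul0r ?addr0 ?add0r.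
    by rewrite eq_sym.
  by rewrite eqseq_cons -mulnb natrM.
rewrite (eq_bigr (fun i => beta i * (g (proj i) * (e (proj i) a)%:R * (W (d::w) * (proj d :: map proj w == t')%:R))
   + (wt d * (proj d == a)%:R) * (beta i * (g (proj i) * (~~ e (proj i) a)%:R) * E t' i w))); last first.
  by move=> i _; rewrite -/(E (a :: t') i (d :: w)) HE; ring.
rewrite big_split /= -big_distrr /= (beta_lift (fun b => g b * (e b a)%:R * (W (d::w) * (proj d :: map proj w == t')%:R))) (IH w (fun b => g b * (~~ e b a)%:R)).
under [in RHS]eq_bigr do rewrite HS.
rewrite [RHS]big_distrr /= [RHS](eq_bigr (fun b => alpha b * (g b * (e b a)%:R * (W (d::w) * (proj d :: map proj w == t')%:R))
   + (wt d * (proj d == a)%:R) * (W w * (alpha b * (g b * (~~ e b a)%:R) * (fcfs_step e t' b == map proj w)%:R)))); last first.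
  by move=> b _; rewrite W_cons (eq_sym a); ring.
by rewrite big_split /= -!big_distrr.
Qed.


Lemma liftsum_P t' w :
  liftsum t' (fun t => W t * fcfs_P (decomp e x) beta t w) = W w * fcfs_P e alpha t' (map proj w).
Proof.
rewrite (@liftsum_ext _ _ (fun t => \sum_i beta i * (W t * (fcfs_step (decomp e x) t i == w)%:R))); last first.
  move=> t; rewrite /fcfs_P big_distrr big_mkcond /=; apply: eq_bigr => i _.
  by case: (_ == w) => /=; ring.
rewrite liftsum_sum; under eq_bigr do rewrite liftsum_scale liftsum_step.
rewrite (eq_bigr (fun i => beta i * 1 * E t' i w)); last by move=> i _; rewrite mulr1.
rewrite (E_sum t' w (fun _ => 1)); congr (_ * _); rewrite /fcfs_P [RHS]big_mkcond /=; apply: eq_bigr => a _.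
by case: (_ == _) => /=; ring.
Qed.

Lemma has_sum_scale (a : nat -> R) l k : has_sum a l -> has_sum (fun n => k * a n) (k * l).
Proof.
rewrite /has_sum => H.
have -> : series (fun n => k * a n) = (fun n => k * series a n).
  by apply: funext => n; rewrite /series /= big_distrr.
exact: cvgMl_tmp.
Qed.

Lemma decomp_mean m : mean_queue e alpha m -> mean_queue (decomp e x) beta m.
Proof.
case=> pi [[pi0 pisum pistat] pimean].
exists (fun t => pi (map proj t) * W t); split; [split|].
- by move=> w; apply: mulr_ge0 => //; exact: W_ge0.
- suff -> : (fun n => \sum_(t : n.-tuple (option T)) pi (map proj t) * W t) =
            (fun n => \sum_(t : n.-tuple T) pi t) by [].
  apply: funext => n; rewrite sum_lift; apply: eq_bigr => t _.
  by rewrite liftsum_W mulr1.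
- move=> w.
  have -> : (fun n => \sum_(t : n.-tuple (option T)) pi (map proj t) * W t * fcfs_P (decomp e x) beta t w) =
     (fun n => W w * \sum_(t : n.-tuple T) pi t * fcfs_P e alpha t (map proj w)).
    apply: funext => n; under eq_bigr do rewrite -mulrA.
    rewrite (sum_lift n pi (fun t => W t * fcfs_P (decomp e x) beta t w)) big_distrr; apply: eq_bigr => t _; rewrite liftsum_P /=; ring.
  rewrite mulrC; exact: has_sum_scale (pistat (map proj w)).
- suff -> : (fun n => n%:R * \sum_(t : n.-tuple (option T)) pi (map proj t) * W t) =
            (fun n => n%:R * \sum_(t : n.-tuple T) pi t) by [].
  apply: funext => n; rewrite sum_lift; congr (_ * _); apply: eq_bigr => t _.
  by rewrite liftsum_W mulr1.
Qed.

End Lift.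

Lemma add_edge_decomp (T : finType) (e : rel T) (u v x : T) :
  x != u -> x != v ->
  add_edge (decomp e x) (Some u) (Some v) = decomp (add_edge e u v) x.
Proof.
move=> xu xv; apply: funext => a; apply: funext => b.
case: a => [a|]; case: b => [b|]; rewrite /add_edge /= ?(negPf xu) ?(negPf xv) ?orbF //.

Qed.

Theorem mainTheorem13 (R : realType) (T : finType) (e : rel T) (alpha : T -> R)
    (u v x : T) (by_ bz mQ mQbar : R) :
  symmetric e -> irreflexive e -> (forall a b, connect e a b) ->
  (forall i, 0 < alpha i) -> \sum_(i : T) alpha i = 1 ->
  u != v -> ~~ e u v -> x != u -> x != v ->
  mean_queue e alpha mQ ->
  mean_queue (add_edge e u v) alpha mQbar ->
  mQ < mQbar ->
  0 < by_ -> 0 < bz -> by_ + bz = alpha x ->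
  exists mQyz mQyzbar : R,
    [/\ mean_queue (decomp e x) (decomp_dist alpha x by_ bz) mQyz,
        mean_queue (add_edge (decomp e x) (Some u) (Some v))
                   (decomp_dist alpha x by_ bz) mQyzbar
      & mQyz < mQyzbar].
Proof.
move=> _ irr _ apos _ _ _ xu xv HQ HQb lt bpos zpos bsum.
have exx : e x x = false by apply/negbTE; rewrite irr.
exists mQ, mQbar; split => //.
- exact: (@decomp_mean R T e x alpha by_ bz exx (apos x) (ltW bpos) (ltW zpos) bsum mQ HQ).
- rewrite add_edge_decomp //.
  have exx' : add_edge e u v x x = false by rewrite /add_edge exx (negPf xu) (negPf xv).
  exact: (@decomp_mean R T (add_edge e u v) x alpha by_ bz exx' (apos x) (ltW bpos) (ltW zpos) bsum mQbar HQb).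
Qed.
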